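(* Let $S\subseteq\mathbb{R}^n\times\mathbb{R}^m$ be convex, let (CP) be bounded and fix $p\in[1,\infty]$. If $\bar S\subseteq S$ is a finite $\epsilon$-solution of (CP), then $\bar S$ is a Hausdorff-type finite $(\|Q\|\epsilon)$-solution of (MOCP), where $\|Q\|=(m^{p-1}+1)^{1/p}$ is the operator norm of $Q$ induced by the $p$-norms (equal to $m$ for $p=\infty$).
   Context: $\|\cdot\|$ is the $p$-norm, $B_\epsilon$ its closed $\epsilon$-ball. (CP): compute $Y=\{y:\exists x,(x,y)\in S\}$; bounded means $Y\subseteq B_K$ for some $K$; a nonempty finite $\bar S\subseteq S$ is a finite $\epsilon$-solution if $Y\subseteq\operatorname{conv}\operatorname{proj}_y[\bar S]+B_\epsilon$. $P(x,y)=(y,-\mathbf{1}^\top y)$, $Qy=(y,-\mathbf{1}^\top y)$, with $\mathbf{1}\in\mathbb{R}^m$ all-ones. (MOCP): minimize $P(x,y)$ w.r.t. $\le_{\mathbb{R}^{m+1}_+}$ over $(x,y)\in S$, upper image $\mathcal{P}=\operatorname{cl}(P[S]+\mathbb{R}^{m+1}_+)$. Hausdorff distance $d_H(A_1,A_2)=\max\{\sup_{a_1\in A_1}\inf_{a_2\in A_2}\|a_1-a_2\|,\sup_{a_2\in A_2}\inf_{a_1\in A_1}\|a_1-a_2\|\}$. A nonempty finite $\bar S\subseteq S$ is a Hausdorff-type finite $\epsilon$-solution of (MOCP) if $d_H(\mathcal{P},\operatorname{conv}P[\bar S]+\mathbb{R}^{m+1}_+)\le\epsilon$. *)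

(* Defs.v *)
From HB Require Import structures.
From mathcomp Require Import all_boot all_order all_algebra.
From mathcomp Require Import all_classical all_reals all_analysis.
Set Implicit Arguments. Unset Strict Implicit. Unset Printing Implicit Defensive.
Import Order.TTheory GRing.Theory Num.Theory.
Import numFieldNormedType.Exports.
Local Open Scope classical_set_scope.
Local Open Scope ring_scope.

Definition pnorm (R : realType) (p : \bar R) (k : nat) (x : 'rV[R]_k) : R :=
  match p with
  | EFin r => (\sum_(i < k) `|x ord0 i| `^ r) `^ r^-1
  | _ => \big[Num.max/0]_(i < k) `|x ord0 i|
  end.
Arguments pnorm {R} p {k} x.

(* operator norm of Q induced by p-norms: (m^(p-1)+1)^(1/p), and m for p = oo *)
Definition Qnorm (R : realType) (p : \bar R) (m : nat) : R :=
  match p with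
  | EFin r => ((m%:R) `^ (r - 1) + 1) `^ r^-1
  | _ => m%:R
  end.
Arguments Qnorm {R} p m.

Definition pball (R : realType) (p : \bar R) (k : nat) (eps : R) : set 'rV[R]_k :=
  [set z | pnorm p z <= eps].
Arguments pball {R} p k eps.

Definition msum (R : realType) (k : nat) (A B : set 'rV[R]_k) : set 'rV[R]_k :=
  [set a + b | a in A & b in B].
Arguments msum {R k} A B.

Definition orthant (R : realType) (k : nat) : set 'rV[R]_k :=
  [set d | forall i, 0 <= d ord0 i].
Arguments orthant {R} k.

Definition conv (R : realType) (k : nat) (A : set 'rV[R]_k) : set 'rV[R]_k :=
  [set z | exists (N : nat) (w : 'I_N -> R) (a : 'I_N -> 'rV[R]_k),
     (forall i, 0 <= w i) /\ \sum_(i < N) w i = 1 /\ (forall i, A (a i)) /\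
     z = \sum_(i < N) w i *: a i].
Arguments conv {R k} A.

Definition convex_set2 (R : realType) (n m : nat)
  (S : set ('rV[R]_n * 'rV[R]_m)) : Prop :=
  forall a b, S a -> S b -> forall l : R, 0 <= l <= 1 ->
    S (l *: a.1 + (1 - l) *: b.1, l *: a.2 + (1 - l) *: b.2).
Arguments convex_set2 {R n m} S.

Definition projY (R : realType) (n m : nat) (S : set ('rV[R]_n * 'rV[R]_m))
  : set 'rV[R]_m := [set xy.2 | xy in S].
Arguments projY {R n m} S.

Definition CP_bounded (R : realType) (p : \bar R) (n m : nat)
  (S : set ('rV[R]_n * 'rV[R]_m)) : Prop :=
  exists K : R, projY S `<=` pball p m K.
Arguments CP_bounded {R} p {n m} S.

Definition finite_eps_solution_CP (R : realType) (p : \bar R) (n m : nat)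
  (S Sbar : set ('rV[R]_n * 'rV[R]_m)) (eps : R) : Prop :=
  [/\ finite_set Sbar, Sbar !=set0, Sbar `<=` S &
      projY S `<=` msum (conv (projY Sbar)) (pball p m eps)].
Arguments finite_eps_solution_CP {R} p {n m} S Sbar eps.

Definition Pobj (R : realType) (n m : nat) (xy : 'rV[R]_n * 'rV[R]_m)
  : 'rV[R]_(m + 1) :=
  row_mx xy.2 (\row_(j < 1) - \sum_(i < m) xy.2 ord0 i).
Arguments Pobj {R n m} xy.

Definition upper_image (R : realType) (n m : nat) (S : set ('rV[R]_n * 'rV[R]_m))
  : set 'rV[R]_(m + 1) :=
  closure (msum (Pobj @` S) (orthant (m + 1))).
Arguments upper_image {R n m} S.

Definition hausdorff (R : realType) (p : \bar R) (k : nat) (A1 A2 : set 'rV[R]_k)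
  : \bar R :=
  maxe (ereal_sup [set ereal_inf [set (pnorm p (a1 - a2))%:E | a2 in A2] | a1 in A1])
       (ereal_sup [set ereal_inf [set (pnorm p (a1 - a2))%:E | a1 in A1] | a2 in A2]).
Arguments hausdorff {R} p {k} A1 A2.

Definition hausdorff_finite_eps_solution_MOCP (R : realType) (p : \bar R) (n m : nat)
  (S Sbar : set ('rV[R]_n * 'rV[R]_m)) (eps : R) : Prop :=
  [/\ finite_set Sbar, Sbar !=set0, Sbar `<=` S &
      (hausdorff p (upper_image S)
         (msum (conv (Pobj @` Sbar)) (orthant (m + 1))) <= eps%:E)%E].
Arguments hausdorff_finite_eps_solution_MOCP {R} p {n m} S Sbar eps.

(* Main.v *)
Require Import Defs.
From HB Require Import structures.
From mathcomp Require Import all_boot all_order all_algebra.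
From mathcomp Require Import all_classical all_reals all_analysis.
From mathcomp Require Import lra.
Set Implicit Arguments. Unset Strict Implicit. Unset Printing Implicit Defensive.
Import Order.TTheory GRing.Theory Num.Theory.
Import numFieldNormedType.Exports.
Local Open Scope classical_set_scope.
Local Open Scope ring_scope.
Section S.
Variable R : realType.
Definition sq k (v : 'rV[R]_k) (n : nat) : R := \sum_(i < k | val i == n) v ord0 i.
Lemma sq_ord k (v : 'rV[R]_k) (i : 'I_k) : sq v i = v ord0 i.
Proof. by rewrite /sq (big_pred1 i). Qed.
Lemma sq_out k (v : 'rV[R]_k) n : (k <= n)%N -> sq v n = 0.
Proof. move=> kn; rewrite /sq big1 // => i /eqP ei; move: (ltn_ord i); rewrite ei ltnNge kn. by []. Qed.
Lemma sqD k (x y : 'rV[R]_k) n : sq (x + y) n = sq x n + sq y n.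
Proof. by rewrite /sq -big_split /=; apply: eq_bigr => i _; rewrite mxE. Qed.
Lemma sum_sq k (v : 'rV[R]_k) (F : R -> R) : F 0 = 0 -> (forall x, 0 <= F x) ->
  (\sum_(n <oo) (F (sq v n))%:E = (\sum_(i < k) F (v ord0 i))%:E)%E.
Proof.
move=> F0 Fge.
rewrite (nneseries_split 0 k); last by move=> j _; rewrite lee_fin.
rewrite add0n ereal_series_cond eseries0 ?adde0; last first.
  by move=> j _ /andP[kj _]; rewrite sq_out // F0.
by rewrite big_mkord sumEFin; congr (_%:E); apply: eq_bigr => i _; rewrite sq_ord.
Qed.
Definition pnr k (r : R) (v : 'rV[R]_k) := (\sum_(i < k) `|v ord0 i| `^ r) `^ r^-1.
Lemma Lnorm_sq k r (v : 'rV[R]_k) : 0 < r ->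
  Lnorm counting r%:E (EFin \o sq v) = (pnr r v)%:E.
Proof.
move=> r0; rewrite Lnorm_counting //.
under eq_eseriesr => n _ do rewrite (_ : (EFin \o sq v) n = (sq v n)%:E) // abse_EFin poweR_EFin.
rewrite (sum_sq v (F := fun x => `|x| `^ r)) ?poweR_EFin //.
by rewrite normr0 powR0 // gt_eqF.
Qed.
Lemma minkowski_pnr k r (x y : 'rV[R]_k) : 1 <= r -> pnr r (x + y) <= pnr r x + pnr r y.
Proof.
move=> r1; have r0 : 0 < r by rewrite (lt_le_trans _ r1).
have mf (v : 'rV[R]_k) : measurable_fun [set: nat] (sq v) by [].
have := @minkowski_EFin _ _ R counting (sq x) (sq y) r (mf x) (mf y) r1.
rewrite !Lnorm_sq // (eq_Lnorm _ _ (g := EFin \o sq (x + y))); last by move=> n /=; rewrite sqD.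
by rewrite Lnorm_sq // lee_fin.
Qed.

Definition Qv m (b : 'rV[R]_m) : 'rV[R]_(m + 1) :=
  row_mx b (\row_(j < 1) - \sum_(i < m) b ord0 i).
Lemma pnr_Qv m r (b : 'rV[R]_m) :
  pnr r (Qv b) = (\sum_(i < m) `|b ord0 i| `^ r + `|\sum_(i < m) b ord0 i| `^ r) `^ r^-1.
Proof.
rewrite /pnr /Qv big_split_ord /= big_ord1; congr (_ `^ _); congr (_ + _ `^ _).
  by apply: eq_bigr => i _; rewrite row_mxEl.
by rewrite row_mxEr mxE normrN.
Qed.
Lemma hoelder_sum m r (b : 'rV[R]_m) : 1 < r ->
  `|\sum_(i < m) b ord0 i| <= pnr r b * (m%:R) `^ (1 - r^-1).
Proof.
move=> r1; have r0 : 0 < r by rewrite (lt_trans _ r1).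
have ri1 : r^-1 < 1 by rewrite invf_lt1.
pose q := (1 - r^-1)^-1.
have q0 : 0 < q by rewrite invr_gt0 subr_gt0.
have pq : r^-1 + q^-1 = 1 by rewrite invrK addrC subrK.
have mf (v : 'rV[R]_m) : measurable_fun [set: nat] (sq v) by [].
have := @hoelder _ _ R counting (sq b) (sq (const_mx 1)) r q (mf _) (mf _) r0 q0 pq.
rewrite !Lnorm_sq // (eq_Lnorm _ _ (g := EFin \o sq b)); last first.
  move=> n /=; case: (ltnP n m) => nm.
    by rewrite -[n]/(val (Ordinal nm)) !sq_ord mxE mulr1.
  by rewrite !sq_out // mulr0.
rewrite (Lnorm_sq _ ltr01) lee_fin => h.
apply: (le_trans _ (le_trans h _)).
  rewrite /pnr invr1 powRr1; last by apply: sumr_ge0 => i _; rewrite powR_ge0.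
  rewrite (le_trans (ler_norm_sum _ _ _)) //.
  by apply: ler_sum => i _; rewrite powRr1.
apply: ler_wpM2l; first exact: powR_ge0.
rewrite /pnr /q invrK; under eq_bigr do rewrite mxE normr1 powR1.
by rewrite sumr_const card_ord.
Qed.

Lemma Q_pnr m r (b : 'rV[R]_m) : 1 <= r ->
  pnr r (Qv b) <= ((m%:R) `^ (r - 1) + 1) `^ r^-1 * pnr r b.
Proof.
move=> r1; have r0 : 0 < r by rewrite (lt_le_trans _ r1).
set A := \sum_(i < m) `|b ord0 i| `^ r.
have A0 : 0 <= A by apply: sumr_ge0 => i _; rewrite powR_ge0.
have key : `|\sum_(i < m) b ord0 i| `^ r <= (m%:R) `^ (r - 1) * A.
  move: r1; rewrite le_eqVlt => /predU1P[r1|r1].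
    rewrite -r1 subrr powRr0 mul1r powRr1 // /A.
    rewrite (le_trans (ler_norm_sum _ _ _)) //.
    by apply: ler_sum => i _; rewrite -r1 powRr1.
  have h := hoelder_sum b r1.
  have := @ge0_ler_powR R r (ltW r0) _ _ _ _ h.
  rewrite !nnegrE normr_ge0 mulr_ge0 ?powR_ge0 // => /(_ isT isT) h2.
  apply: (le_trans h2); rewrite /pnr powRM ?powR_ge0 // -!powRrM mulVf ?gt_eqF //.
  rewrite powRr1 //.
  rewrite (_ : (1 - r^-1) * r = r - 1); first by rewrite mulrC.
  by rewrite mulrBl mul1r mulVf ?gt_eqF.
rewrite pnr_Qv /pnr -powRM ?addr_ge0 ?powR_ge0 ?ler0n //.
apply: ge0_ler_powR; first by rewrite invr_ge0 ltW.
- by rewrite nnegrE addr_ge0 ?powR_ge0.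
- by rewrite nnegrE mulr_ge0 ?addr_ge0 ?powR_ge0.
by rewrite mulrDl mul1r addrC lerD2r.
Qed.

Definition pmx k (v : 'rV[R]_k) := \big[Num.max/0]_(i < k) `|v ord0 i|.
Lemma pmx_ge0 k (v : 'rV[R]_k) : 0 <= pmx v.
Proof. by rewrite /pmx; elim/big_ind: _ => // x y hx hy; rewrite le_max hx. Qed.
Lemma le_pmx k (v : 'rV[R]_k) i : `|v ord0 i| <= pmx v.
Proof. exact: le_bigmax. Qed.
Lemma pmx_le k (v : 'rV[R]_k) M : 0 <= M -> (forall i, `|v ord0 i| <= M) -> pmx v <= M.
Proof. by move=> M0 h; apply: bigmax_le. Qed.
Lemma pmxD k (x y : 'rV[R]_k) : pmx (x + y) <= pmx x + pmx y.
Proof.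
apply: pmx_le; first by rewrite addr_ge0 ?pmx_ge0.
by move=> i; rewrite mxE (le_trans (ler_normD _ _)) // lerD ?le_pmx.
Qed.
Lemma pmx0 k : pmx (0 : 'rV[R]_k) = 0.
Proof. by apply/eqP; rewrite eq_le pmx_ge0 andbT; apply: pmx_le => // i; rewrite mxE normr0. Qed.
Lemma pmx_Qv m (b : 'rV[R]_m) : pmx (Qv b) <= m%:R * pmx b.
Proof.
apply: pmx_le; first by rewrite mulr_ge0 ?pmx_ge0.
move=> i; rewrite -[i]splitK; case: (fintype.split i) => j /=.
  rewrite /Qv row_mxEl (le_trans (le_pmx _ j)) //.
  rewrite -[X in X <= _]mul1r ler_wpM2r ?pmx_ge0 // ler1n.
  by apply: leq_ltn_trans (leq0n j) (ltn_ord j).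
rewrite /Qv row_mxEr mxE normrN (le_trans (ler_norm_sum _ _ _)) //.
rewrite (le_trans (ler_sum _ (fun i _ => le_pmx b i))) //.
by rewrite sumr_const card_ord mulr_natl.
Qed.
Lemma pnr_ge0 k r (v : 'rV[R]_k) : 0 <= pnr r v.
Proof. exact: powR_ge0. Qed.
Lemma pnr0 k r : 0 < r -> pnr r (0 : 'rV[R]_k) = 0.
Proof.
move=> r0; rewrite /pnr big1 ?powR0 ?invr_neq0 ?gt_eqF //.
by move=> i _; rewrite mxE normr0 powR0 ?gt_eqF.
Qed.
Lemma pnr_le k r (v : 'rV[R]_k) M : 0 < r -> 0 <= M -> (forall i, `|v ord0 i| <= M) ->
  pnr r v <= (k%:R) `^ r^-1 * M.
Proof.
move=> r0 M0 h; rewrite /pnr.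
apply: (@le_trans _ _ ((k%:R * M `^ r) `^ r^-1)).
  apply: ge0_ler_powR; first by rewrite invr_ge0 ltW.
  - by rewrite nnegrE sumr_ge0 // => i _; rewrite powR_ge0.
  - by rewrite nnegrE mulr_ge0 ?powR_ge0.
  rewrite (_ : k%:R * M `^ r = \sum_(i < k) M `^ r); last by rewrite sumr_const card_ord mulr_natl.
  apply: ler_sum => i _; apply: ge0_ler_powR; [exact: ltW | by rewrite nnegrE | by rewrite nnegrE | exact: h].
rewrite powRM ?powR_ge0 // -powRrM mulfV ?gt_eqF // powRr1 //.
Qed.
Definition Qm m : 'M[R]_(m, m + 1) := row_mx 1%:M (const_mx (-1)).
Lemma QvE m (b : 'rV[R]_m) : Qv b = b *m Qm m.
Proof.
rewrite /Qv /Qm mul_mx_row mulmx1; congr row_mx.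
apply/rowP => j; rewrite !mxE -sumrN; apply: eq_bigr => i _.
by rewrite !mxE mulrN1.
Qed.
Lemma closure_approx k (A : set 'rV[R]_k) a (d : R) :
  closure A a -> 0 < d -> exists z, A z /\ forall i, `|a ord0 i - z ord0 i| < d.
Proof.
move=> ca d0.
have := ca (ball a d) (nbhsx_ballx a d d0).
case=> z [Az bz]; exists z; split => // i.
by move: bz; rewrite /ball /= => -[_ /(_ ord0 i)]; rewrite /ball /=.
Qed.
Lemma convex_comb n m (S : set ('rV[R]_n * 'rV[R]_m)) N
  (w : 'I_N -> R) (t : 'I_N -> 'rV[R]_n * 'rV[R]_m) :
  convex_set2 S -> (forall i, 0 <= w i) -> \sum_(i < N) w i = 1 ->
  (forall i, S (t i)) ->
  S (\sum_(i < N) w i *: (t i).1, \sum_(i < N) w i *: (t i).2).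
Proof.
move=> cS; elim: N w t => [|N IH] w t w0 w1 St.
  by move: w1; rewrite big_ord0 => /eqP; rewrite eq_sym oner_eq0.
rewrite !big_ord_recr /=; move: w1; rewrite big_ord_recr /= => w1.
set l := w ord_max in w1 *.
have s0 : 0 <= \sum_(i < N) w (widen_ord (leqnSn N) i) by apply: sumr_ge0.
have [l1|l1] := eqVneq l 1.
  have : \sum_(i < N) w (widen_ord (leqnSn N) i) = 0.
    by move: w1; rewrite l1 => /(congr1 (fun x => x - 1)); rewrite addrK subrr.
  move/psumr_eq0P => /(_ (fun i _ => w0 _)) wz.
  rewrite !big1 ?add0r ?l1 ?scale1r => [|i _|i _]; rewrite ?wz ?scale0r //.
  by case: (t ord_max) (St ord_max).
set c := 1 - l.
have c0 : 0 < c.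
  rewrite subr_gt0 lt_neqAle l1 /=.
  by rewrite -w1 lerDr.
pose w' i := w (widen_ord (leqnSn N) i) / c.
have := IH w' (fun i => t (widen_ord (leqnSn N) i)) _ _ _.
have hc : \sum_(i < N) w (widen_ord (leqnSn N) i) = c by rewrite /c -w1 addrK.
have cn0 : c != 0 by rewrite gt_eqF.
move=> /(_ (fun i => divr_ge0 (w0 _) (ltW c0))).
rewrite {1}/w' -mulr_suml hc mulfV // => /(_ erefl (fun i => St _)) Ss'.
have c1 : 0 <= c <= 1 by rewrite (ltW c0) /c gerBl w0.
have lc : 1 - c = l by rewrite /c opprB addrC subrK.
have := cS _ _ Ss' (St ord_max) c c1; rewrite /= lc.
rewrite !scaler_sumr.
have e (T : lmodType R) (x : 'I_N -> T) : \sum_(i < N) c *: (w' i *: x i) = \sum_(i < N) w (widen_ord (leqnSn N) i) *: x i.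
  by apply: eq_bigr => i _; rewrite scalerA /w' mulrCA mulfV // mulr1.
by rewrite !e.
Qed.
End S.

Lemma rearr (R : realType) k (x S B D : 'rV[R]_k) : x - (S + D) = x - (S + B + D) + B.
Proof. by rewrite (addrAC S B D) !opprD !addrA subrK. Qed.

Lemma pcases (R : realType) (p : \bar R) : (1%:E <= p)%E ->
  (exists2 r, 1 <= r & p = r%:E) \/ p = +oo%E.
Proof. by case: p => [r|_|//]; [rewrite lee_fin => r1; left; exists r | right]. Qed.

Lemma pnorm_ge0 (R : realType) (p : \bar R) k (v : 'rV[R]_k) : (1%:E <= p)%E -> 0 <= pnorm p v.
Proof. by move/pcases => [[r r1 ->]|->]; [exact: pnr_ge0 | exact: pmx_ge0]. Qed.

Lemma pnormD (R : realType) (p : \bar R) k (x y : 'rV[R]_k) : (1%:E <= p)%E ->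
  pnorm p (x + y) <= pnorm p x + pnorm p y.
Proof. by move/pcases => [[r r1 ->]|->]; [exact: minkowski_pnr | exact: pmxD]. Qed.

Lemma pnorm0 (R : realType) (p : \bar R) k : (1%:E <= p)%E -> pnorm p (0 : 'rV[R]_k) = 0.
Proof.
move/pcases => [[r r1 ->]|->]; last exact: pmx0.
by apply: pnr0; rewrite (lt_le_trans _ r1).
Qed.

Lemma pnormQ (R : realType) (p : \bar R) m (b : 'rV[R]_m) : (1%:E <= p)%E ->
  pnorm p (Qv b) <= Qnorm p m * pnorm p b.
Proof. by move/pcases => [[r r1 ->]|->]; [exact: Q_pnr | exact: pmx_Qv]. Qed.

Lemma Qnorm_ge0 (R : realType) (p : \bar R) m : (1%:E <= p)%E -> 0 <= Qnorm p m.
Proof. by move/pcases => [[r r1 ->]|->]; [exact: powR_ge0 | exact: ler0n]. Qed.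

Lemma pnorm_bound (R : realType) (p : \bar R) k : (1%:E <= p)%E ->
  exists2 C : R, 0 <= C & forall (v : 'rV[R]_k) M, 0 <= M ->
    (forall i, `|v ord0 i| <= M) -> pnorm p v <= C * M.
Proof.
move/pcases => [[r r1 ->]|->].
  exists ((k%:R) `^ r^-1); first exact: powR_ge0.
  by move=> v M M0 h; apply: pnr_le => //; rewrite (lt_le_trans _ r1).
exists 1 => // v M M0 h; rewrite mul1r; exact: pmx_le.
Qed.

Lemma PobjE (R : realType) n m (xy : 'rV[R]_n * 'rV[R]_m) : Pobj xy = xy.2 *m Qm R m.
Proof. exact: QvE. Qed.

Theorem mainTheorem16 (R : realType) (n m : nat) (p : \bar R)
  (S Sbar : set ('rV[R]_n * 'rV[R]_m)) (eps : R) :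
  (1%:E <= p)%E ->
  convex_set2 S ->
  CP_bounded p S ->
  finite_eps_solution_CP p S Sbar eps ->
  hausdorff_finite_eps_solution_MOCP p S Sbar (Qnorm p m * eps).
Proof.
move=> p1 cS _ [fin ne sub cov].
have Qn0 := Qnorm_ge0 m p1.
have eps0 : 0 <= eps.
  case: ne => s0 Ss0.
  have [c _ [b Bb _]] := cov s0.2 (ex_intro2 _ _ s0 (sub _ Ss0) erefl).
  exact: le_trans (pnorm_ge0 b p1) Bb.
split => //.
rewrite /hausdorff ge_max; apply/andP; split.
- apply: ub_ereal_sup => _ [a1 Ha1 <-].
  apply/lee_addgt0Pr => d d0.
  have [C C0 HC] := pnorm_bound (m + 1) p1.
  pose d' := d / (C + 1).
  have d'0 : 0 < d' by rewrite /d' divr_gt0 //; lra.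
  have [z [Az Hz]] := closure_approx Ha1 d'0.
  case: Az => _ [s Ss <-] [dd Hdd ez].
  have [c [N [w [a [w0 [w1 [Aa ec]]]]]] [b Bb ecb]] :=
    cov s.2 (ex_intro2 _ _ s Ss erefl).
  have [t Ht] : exists t : 'I_N -> 'rV[R]_n * 'rV[R]_m,
      forall i, Sbar (t i) /\ (t i).2 = a i.
    have /choice [t Ht] : forall i, exists t, Sbar t /\ t.2 = a i.
      by move=> i; case: (Aa i) => t ? ?; exists t.
    by exists t.
  pose a2 := \sum_(i < N) w i *: Pobj (t i) + dd.
  have Ba2 : Defs.msum (Defs.conv (Pobj @` Sbar)) (Defs.orthant (m + 1)) a2.
    exists (\sum_(i < N) w i *: Pobj (t i)); last by exists dd.
    exists N, w, (fun i => Pobj (t i)); split=> //; split=> //; split=> // i.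
    by exists (t i); [case: (Ht i)|].
  apply: le_trans (ereal_inf_lbound (ex_intro2 _ _ a2 Ba2 erefl)) _.
  rewrite lee_fin.
  have ediff : a1 - a2 = (a1 - z) + Qv b.
    have eP : \sum_(i < N) w i *: Pobj (t i) + Qv b = Pobj s.
      rewrite [Pobj s]PobjE QvE -ecb ec mulmxDl mulmx_suml; congr (_ + _).
      apply: eq_bigr => i _; rewrite -scalemxAl PobjE.
      by case: (Ht i) => _ ->.
    by rewrite -ez /a2 [in LHS](rearr _ _ (Qv b)) eP.
  rewrite ediff; apply: le_trans (pnormD _ _ p1) _.
  rewrite [X in _ <= X]addrC lerD //.
    apply: (le_trans (HC _ d' (ltW d'0) _)).
      by move=> i; rewrite !mxE; apply: ltW.
    rewrite /d' mulrA ler_pdivrMr; last by lra.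
    nra.
  apply: le_trans (pnormQ b p1) _.
  by apply: ler_wpM2l.
- apply: ub_ereal_sup => _ [a2 Ha2 <-].
  apply: ge_ereal_inf; exists 0%:E; last by rewrite lee_fin mulr_ge0.
  exists a2; last by rewrite subrr pnorm0.
  apply: subset_closure.
  case: Ha2 => u [N [w [a [w0 [w1 [Aa eu]]]]]] [dd Hdd <-].
  have [t Ht] : exists t : 'I_N -> 'rV[R]_n * 'rV[R]_m,
      forall i, Sbar (t i) /\ Pobj (t i) = a i.
    have /choice [t Ht] : forall i, exists t, Sbar t /\ Pobj t = a i.
      by move=> i; case: (Aa i) => t ? ?; exists t.
    by exists t.
  exists u; last by exists dd.
  exists (\sum_(i < N) w i *: (t i).1, \sum_(i < N) w i *: (t i).2).
    by apply: convex_comb => // i; apply: sub; case: (Ht i).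
  rewrite eu PobjE /= mulmx_suml; apply: eq_bigr => i _.
  by rewrite -scalemxAl -PobjE; case: (Ht i) => _ ->.
Qed.
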